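(* The set $\mathcal{M}^+(X)$ of fully-supported Borel probability measures on $X=A^{\mathbb{N}}$, where $A$ is a finite alphabet with at least two symbols, is non-separable with respect to the projective distance \[ \rho(\mu,\nu)=\sup_{n\in\mathbb{N}}\max_{\pmb{a}\in A^n}\frac{1}{n}\left|\log\frac{\mu[\pmb{a}]}{\nu[\pmb{a}]}\right|. \]
   Context: $X=A^{\mathbb{N}}$ carries the product topology and its Borel $\sigma$-algebra. For $\pmb{a}=a_1\cdots a_n\in A^n$, $[\pmb{a}]=\{\pmb{x}\in X:\ x_1\cdots x_n=\pmb{a}\}$. $\mathcal{M}^+(X)$ is the set of Borel probability measures $\mu$ on $X$ with $\mu[\pmb{a}]>0$ for all finite words $\pmb{a}$. *)

(* Defs.v *)
From HB Require Import structures.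
From mathcomp Require Import all_boot all_order all_algebra.
From mathcomp Require Import all_classical all_reals all_analysis.
Set Implicit Arguments. Unset Strict Implicit. Unset Printing Implicit Defensive.
Import Order.TTheory GRing.Theory Num.Theory.
Local Open Scope classical_set_scope.
Local Open Scope ring_scope.

(* The alphabet A (a finite type), pointed at a0 (the measurable-structure
   hierarchy of MathComp-Analysis requires a pointed carrier). *)
Definition alph (A : finType) (a0 : A) : Type := A.
HB.instance Definition _ (A : finType) (a0 : A) := Finite.on (alph a0).
HB.instance Definition _ (A : finType) (a0 : A) := isPointed.Build (alph a0) a0.

Definition seqspace (A : finType) (a0 : A) : Type :=
  {ptws nat -> discrete_topology (alph a0)}.

Definition borelX (A : finType) (a0 : A) : Type :=
  g_sigma_algebraType (@open (seqspace a0)).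

Definition cyl (A : finType) (a0 : A) (n : nat) (w : n.-tuple A) : set (borelX a0) :=
  [set x | forall i : 'I_n, x i = tnth w i].
Arguments cyl {A} a0 {n} w.

Definition fully_supported (R : realType) (A : finType) (a0 : A)
  (mu : probability (borelX a0) R) : Prop :=
  forall (n : nat) (w : n.-tuple A), (0 < mu (cyl a0 w))%E.

Definition proj_dist (R : realType) (A : finType) (a0 : A)
  (mu nu : probability (borelX a0) R) : \bar R :=
  ereal_sup [set y : \bar R | exists (n : nat) (w : n.+1.-tuple A),
     y = ((n.+1%:R)^-1 * `| ln (fine (mu (cyl a0 w)) / fine (nu (cyl a0 w))) |)%:E].

(* Main.v *)
Require Import Defs.
From HB Require Import structures.
From mathcomp Require Import all_boot all_order all_algebra.
From mathcomp Require Import all_classical all_reals all_analysis.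
From mathcomp Require Import zify lra.
Import Order.TTheory GRing.Theory Num.Theory.
Local Open Scope classical_set_scope.
Local Open Scope ring_scope.
Set Implicit Arguments. Unset Strict Implicit.

Lemma wt_ge0 (R : realType) (i : nat) : 0 <= ((2 ^ i.+1)%:R : R)^-1.
Proof. by rewrite invr_ge0. Qed.
Definition wt (R : realType) (i : nat) : {nonneg R} := NngNum (wt_ge0 R i).

Definition mu0 (R : realType) (A : finType) (a0 : A) (pt : nat -> borelX a0)
  : set (borelX a0) -> \bar R :=
  mseries (fun i => mscale (wt R i) (@dirac _ (borelX a0) (pt i) R)) 0.

HB.instance Definition _ (R : realType) (A : finType) (a0 : A) (pt : nat -> borelX a0) :=
  Measure.copy (mu0 R pt) (mseries (fun i => mscale (wt R i) (@dirac _ (borelX a0) (pt i) R)) 0).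

Lemma mu0E (R : realType) (A : finType) (a0 : A) (pt : nat -> borelX a0) U :
  mu0 R pt U = (\sum_(0 <= k <oo) ((2 ^ k.+1)%:R^-1 * (pt k \in U)%:R : R)%:E)%E.
Proof.
rewrite /mu0 /mseries; apply: eq_eseriesr => k _.
by [].
Qed.

Lemma geo_tail (R : realType) (N : nat) :
  (\sum_(N <= k <oo) (((2 ^ k.+1)%:R)^-1 : R)%:E)%E = (((2 ^ N)%:R)^-1 : R)%:E.
Proof.
rewrite -nneseries_addn; last by move=> i; rewrite lee_fin wt_ge0.
apply/cvg_lim => //.
have := @cvg_geometric_eseries_half R 1 N.
rewrite div1r -natrX => h.
have E : (fun n => (\sum_(0 <= i < n) ((2 ^ (i + N).+1)%:R^-1 : R)%:E)%E) =
  eseries (fun k => ((1:R) / (2 ^ (k + N.+1))%:R)%:E).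
  by apply/funext => n; rewrite /eseries; apply: eq_bigr => k _; rewrite div1r addnS.
by rewrite E.
Qed.

Lemma mu0_setT (R : realType) (A : finType) (a0 : A) (pt : nat -> borelX a0) :
  mu0 R pt setT = 1%E.
Proof.
rewrite mu0E (eq_eseriesr (g := fun k => (((2 ^ k.+1)%:R)^-1 : R)%:E)).
  by rewrite geo_tail expn0 invr1.
by move=> k _; rewrite in_setT mulr1.
Qed.

Lemma mu0_ge (R : realType) (A : finType) (a0 : A) (pt : nat -> borelX a0) U i :
  pt i \in U -> ((((2 ^ i.+1)%:R)^-1 : R)%:E <= mu0 R pt U)%E.
Proof.
move=> Hi; rewrite mu0E.
apply: le_trans (nneseries_lim_ge i.+1 _); last first.
  by move=> n _ _; rewrite lee_fin mulr_ge0 ?wt_ge0.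
rewrite big_nat_recr //= Hi mulr1.
rewrite leeDr // sume_ge0 // => n _.
Qed.

Lemma mu0_le (R : realType) (A : finType) (a0 : A) (pt : nat -> borelX a0) U N :
  (forall i, pt i \in U -> (N <= i)%N) ->
  (mu0 R pt U <= (((2 ^ N)%:R)^-1 : R)%:E)%E.
Proof.
move=> HN; rewrite mu0E (@nneseries_split _ _ 0 N); last first.
  by move=> k _; rewrite lee_fin mulr_ge0 ?wt_ge0.
rewrite big1_seq ?add0e; last first.
  move=> k; rewrite mem_index_iota /= => kN.
  case: (boolP (pt k \in U)) => [/HN|] h; first by move: kN; rewrite ltnNge h.
  by rewrite mulr0.
rewrite add0n -geo_tail; apply: lee_nneseries.
  by move=> k _ _; rewrite lee_fin mulr_ge0 ?wt_ge0.
move=> k _; rewrite lee_fin; case: (pt k \in U); rewrite ?mulr1 ?mulr0 //.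
Qed.

HB.instance Definition _ (R : realType) (A : finType) (a0 : A) (pt : nat -> borelX a0) :=
  Measure_isProbability.Build _ _ _ (mu0 R pt) (mu0_setT R pt).


Definition cylS (A : finType) (a0 : A) n (w : n.-tuple A) (l : seq 'I_n) : set (seqspace a0) :=
  fun x => forall i, i \in l -> x i = tnth w i.
Arguments cylS {A} a0 {n} w l.

Lemma cyl_open_aux (A : finType) (a0 : A) n (w : n.-tuple A) (l : seq 'I_n) :
  open (cylS a0 w l).
Proof.
elim: l => [|j l IH].
  rewrite (_ : cylS _ _ _ = setT); first exact: openT.
  by apply/seteqP; split => x //= _ i.
rewrite (_ : cylS _ _ _ = ((fun x : seqspace a0 => x j) @^-1` [set tnth w j]) `&` cylS a0 w l).
  apply: openI => //; apply: open_comp; last exact: discrete_open.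
  move=> x _; exact: (@proj_continuous nat (fun=> discrete_topology (alph a0)) j).
apply/seteqP; split => x; rewrite /cylS /=.
  by move=> H; split; [apply: H; rewrite inE eqxx | move=> i il; apply: H; rewrite inE il orbT].
by move=> [H1 H2] i; rewrite inE => /orP[/eqP ->|/H2].
Qed.

Lemma cyl_meas (A : finType) (a0 : A) n (w : n.-tuple A) : measurable (cyl a0 w).
Proof.
apply: sub_gen_smallest.
rewrite (_ : cyl a0 w = cylS a0 w (enum 'I_n)).
  exact: cyl_open_aux.
apply/seteqP; split => x H i; first by move=> _; exact: H.
by apply: H; rewrite mem_enum.
Qed.

Definition mk (k : nat) : nat := (2 * k + 2)%N.

Definition ypt (A : finType) (a0 b : A) (k : nat) (bit : bool) : borelX a0 :=
  fun p => if (p == mk k) || (bit && (p == (mk k).+1)) then b else a0.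
Arguments ypt {A} a0 b k bit.

Definition bgpt (A : finType) (a0 : A) (j : nat) : borelX a0 :=
  fun p => nth a0 (odflt [::] (pickle_inv j : option (seq A))) p.
Arguments bgpt {A} a0 j.

Definition pt (A : finType) (a0 b : A) (t : nat -> bool) (i : nat) : borelX a0 :=
  if odd i then ypt a0 b i./2 (t i./2) else bgpt a0 i./2.
Arguments pt {A} a0 b t i.

Definition uword (A : finType) (a0 b : A) (k : nat) : (2 * k + 3).+1.-tuple A :=
  [tuple (if val i == mk k then b else a0) | i < (2 * k + 3).+1].
Arguments uword {A} a0 b k.

Lemma code_ge (s : seq nat) : (size s <= CodeSeq.code s)%N.
Proof.
elim: s => [|n s IH] //=.
have h := expn_gt0 2 n; rewrite /= in h.
rewrite -!muln2 -addn1; nia.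
Qed.

Lemma pickle_seq_ge (A : finType) (s : seq A) : (size s <= pickle s)%N.
Proof.
have := code_ge (map pickle s); rewrite size_map.
by [].
Qed.

Lemma bg_in_u (A : finType) (a0 b : A) (k j : nat) :
  b != a0 -> cyl a0 (uword a0 b k) (bgpt a0 j) -> (mk k < j)%N.
Proof.
move=> ba H.
have lt : (mk k < (2 * k + 3).+1)%N by rewrite /mk; lia.
have := H (Ordinal lt); rewrite /bgpt tnth_mktuple /= eqxx.
case E: (pickle_inv j) => [s|] /=; last by rewrite nth_nil => /eqP; rewrite eq_sym (negbTE ba).
move=> hn.
have hs : (mk k < size s)%N.
  rewrite ltnNge; apply/negP => hle; move: hn; rewrite nth_default // => /eqP.
  by rewrite eq_sym (negbTE ba).
have := pickle_seq_ge s; rewrite -(@pickle_invK (seq A) j) E /=.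
move=> h1; apply: leq_trans hs _; exact: h1.
Qed.

Lemma y_in_u (A : finType) (a0 b : A) (k k' : nat) (bit : bool) :
  b != a0 -> (k' == k) ==> bit -> cyl a0 (uword a0 b k) (ypt a0 b k' bit) -> False.
Proof.
move=> ba hk H.
have nba : (a0 == b) = false by rewrite eq_sym (negbTE ba).
have [lt|gt|eq] := ltngtP k' k.
- have l1 : (mk k' < (2 * k + 3).+1)%N by rewrite /mk; lia.
  have := H (Ordinal l1); rewrite /ypt tnth_mktuple /= eqxx /=.
  have -> : (mk k' == mk k) = false by apply/negbTE; rewrite /mk; lia.
  by move/eqP; rewrite eq_sym nba.
- have l1 : (mk k < (2 * k + 3).+1)%N by rewrite /mk; lia.
  have := H (Ordinal l1); rewrite /ypt tnth_mktuple /= eqxx /=.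
  have -> : (mk k == mk k') = false by apply/negbTE; rewrite /mk; lia.
  have -> : (mk k == (mk k').+1) = false by apply/negbTE; rewrite /mk; lia.
  by rewrite andbF /= => /eqP; rewrite nba.
- subst k'; rewrite eqxx /= in hk.
  have l1 : ((mk k).+1 < (2 * k + 3).+1)%N by rewrite /mk; lia.
  have := H (Ordinal l1); rewrite /ypt tnth_mktuple /= eqxx hk /= orbT.
  have -> : ((mk k).+1 == mk k) = false by apply/negbTE; lia.
  by move/eqP; rewrite eq_sym nba.
Qed.

Lemma pt_in_u (A : finType) (a0 b : A) (t : nat -> bool) (k i : nat) :
  b != a0 -> t k -> cyl a0 (uword a0 b k) (pt a0 b t i) -> (4 * k + 6 <= i)%N.
Proof.
move=> ba tk; rewrite /pt; case: ifPn => oi H.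
  exfalso; apply: (y_in_u ba _ H).
  by apply/implyP => /eqP ->.
have := bg_in_u ba H; rewrite /mk.
have := odd_double_half i; rewrite (negbTE oi) add0n => {2}<-.
rewrite -muln2; lia.
Qed.

Lemma yk_in_u (A : finType) (a0 b : A) (k : nat) :
  cyl a0 (uword a0 b k) (ypt a0 b k false).
Proof. by move=> i; rewrite /ypt tnth_mktuple /= orbF. Qed.

Lemma pt_full (A : finType) (a0 b : A) (t : nat -> bool) n (w : n.-tuple A) :
  cyl a0 w (pt a0 b t (pickle (val w)).*2).
Proof.
move=> i; rewrite /pt odd_double doubleK /bgpt pickleK_inv /=.
by rewrite (tnth_nth a0).
Qed.

Lemma key (R : realType) (n : nat) (x y z : R) :
  0 < x -> 0 < y -> 0 < z -> (2 ^ n.+1)%:R * z <= x ->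
  (n.+1%:R)^-1 * `|ln (x / y)| < ln 2 / 2 ->
  (n.+1%:R)^-1 * `|ln (z / y)| < ln 2 / 2 -> False.
Proof.
move=> x0 y0 z0 hx h1 h2.
have N0 : 0 < (n.+1%:R : R) by [].
have h3 : ln ((2 ^ n.+1)%:R * z) <= ln x.
  by rewrite ler_ln ?posrE // mulr_gt0 // ltr0n expn_gt0.
rewrite lnM ?posrE ?ltr0n ?expn_gt0 // natrX lnXn // in h3.
rewrite -[ln _ *+ _]mulr_natr in h3.
rewrite ln_div ?posrE // in h1; rewrite ln_div ?posrE // in h2.
rewrite -(ltr_pM2l N0) mulrA mulfV ?gt_eqF // mul1r in h1.
rewrite -(ltr_pM2l N0) mulrA mulfV ?gt_eqF // mul1r in h2.
move: h1 h2; rewrite !ltr_norml.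
set L := ln 2; set N := (n.+1%:R : R).
have -> : N * (L / 2) = (L * N) / 2 by rewrite mulrC mulrAC.
move: h3; rewrite -/L -/N.
match goal with |- ?G => idtac G end. lra.
Qed.

Lemma no_inj (h : (nat -> bool) -> nat) : injective h -> False.
Proof.
move=> hi.
pose r n : nat -> bool := match pselect (exists t, h t = n) with
  | left e => projT1 (cid e) | right _ => fun _ => true end.
have rK t : r (h t) = t.
  rewrite /r; case: pselect => [e|ne]; last by exfalso; apply: ne; exists t.
  by apply: hi; exact: (projT2 (cid e)).
pose d k := ~~ r k k.
have := congr1 (fun f => f (h d)) (rK d); rewrite /= /d.
by case: (r (h d) (h d)).
Qed.

Lemma fine_pos (R : realType) (A : finType) (a0 : A) (P : probability (borelX a0) R)
  n (w : n.-tuple A) : (0 < P (cyl a0 w))%E ->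
  0 < fine (P (cyl a0 w)) /\ P (cyl a0 w) = (fine (P (cyl a0 w)))%:E.
Proof.
move=> h.
have h1 := probability_le1 P (cyl_meas w).
have fn : P (cyl a0 w) \is a fin_num by rewrite ge0_fin_numE ?(ltW h) // (le_lt_trans h1) // ltey.
split; last by rewrite fineK.
by apply: fine_gt0; rewrite h (le_lt_trans h1) // ltey.
Qed.

Lemma term_lt (R : realType) (A : finType) (a0 : A) (mu nu : probability (borelX a0) R)
  (e : R) n (w : n.+1.-tuple A) : (proj_dist mu nu < e%:E)%E ->
  (n.+1%:R)^-1 * `| ln (fine (mu (cyl a0 w)) / fine (nu (cyl a0 w))) | < e.
Proof.
move=> h; rewrite -lte_fin; apply: le_lt_trans h.
by apply: ereal_sup_ubound; exists n, w.
Qed.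

Theorem theorem2p2 (R : realType) (A : finType) (a0 : A) (hA : (1 < #|A|)%N) :
  ~ (exists D : set (probability (borelX a0) R),
       countable D /\ D `<=` @fully_supported R A a0 /\
       (forall mu : probability (borelX a0) R, fully_supported mu ->
          forall e : R, 0 < e ->
          exists2 nu, D nu & (proj_dist mu nu < e%:E)%E)).
Proof.
move=> [D [cD [sD dense]]].
have [b ba] : exists b : A, b != a0.
  have : (0 < #|predC1 a0|)%N by rewrite cardC1; move: hA; case: #|A|.
  by move/card_gt0P => [b]; rewrite !inE => hb; exists b.
pose mu (t : nat -> bool) : probability (borelX a0) R := mu0 R (pt a0 b t).
have fs t : fully_supported (mu t).
  move=> n w.
  have h := @mu0_ge R _ _ _ _ _ (mem_set (pt_full a0 b t w)).
  apply: (lt_le_trans _ h).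
  by rewrite lte_fin invr_gt0 ltr0n expn_gt0.
pose eps : R := ln 2 / 2.
have eps0 : 0 < eps by rewrite /eps divr_gt0 // ln_gt0 // ltr1n.
have G t : {nu | D nu /\ (proj_dist (mu t) nu < eps%:E)%E}.
  by apply: cid; have [nu Dnu hnu] := dense _ (fs t) _ eps0; exists nu.
pose g t := proj1_sig (G t).
have gD t : D (g t) by rewrite /g; case: (proj2_sig (G t)).
have gd t : (proj_dist (mu t) (g t) < eps%:E)%E by rewrite /g; case: (proj2_sig (G t)).
have main s t k : s k = false -> t k = true -> g s = g t -> False.
  move=> sk tk gst.
  set w := uword a0 b k.
  have [x0 xE] := fine_pos (fs s _ w).
  have [z0 zE] := fine_pos (fs t _ w).
  have [y0 yE] := fine_pos (sD _ (gD s) _ w).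
  have h1 := term_lt w (gd s).
  have h2 := term_lt w (gd t); rewrite -gst in h2.
  have lx : ((2 ^ (k.*2).+2)%:R^-1 : R) <= fine (mu s (cyl a0 w)).
    rewrite -lee_fin -xE.
    have hm : pt a0 b s (k.*2).+1 \in cyl a0 w.
      apply: mem_set; rewrite /pt /= odd_double /= uphalf_double sk; exact: yk_in_u.
    exact: (@mu0_ge R _ _ _ _ _ hm).
  have lz : fine (mu t (cyl a0 w)) <= ((2 ^ (4 * k + 6))%:R^-1 : R).
    rewrite -lee_fin -zE; apply: (@mu0_le R) => i; rewrite in_setE => hi.
    exact: (pt_in_u ba tk hi).
  apply: (key x0 y0 z0 _ h1 h2).
  have e1 : (4 * k + 6 = (2 * k + 3).+1 + (k.*2).+2)%N by rewrite -muln2; lia.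
  rewrite e1 expnD natrM in lz.
  apply: le_trans lx.
  have P0 : (0 : R) < (2 ^ (2 * k + 3).+1)%:R by rewrite ltr0n expn_gt0.
  have Q0 : (0 : R) < (2 ^ (k.*2).+2)%:R by rewrite ltr0n expn_gt0.
  rewrite -(ler_pM2l P0) in lz; apply: le_trans lz _.
  by rewrite invfM mulrA mulfV ?gt_eqF // mul1r.
have ginj : injective g.
  move=> s t gst; apply/funext => k.
  case: (eqVneq (s k) (t k)) => // ne.
  case E: (s k) ne => ne.
    have tk : t k = false by move: ne; case: (t k).
    by exfalso; apply: (main t s k) => //.
  have tk : t k = true by move: ne; case: (t k).
  by exfalso; apply: (main s t k).
move/countable_injP: cD => [f fi].
apply: (@no_inj (f \o g)) => s t /= fst.
by apply: ginj; apply: fi => //; rewrite in_setE.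
Qed.
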